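(* Let $G$ be a group and $K$ a finite index subgroup of $G$. Suppose $\tilde K\le K$ is a finite index subgroup, $\phi:\tilde K\to K$ is a homomorphism and $X$ is a transversal of $\tilde K$ in $K$ such that the action of $K$ on $X^*$ associated to $(K,\tilde K,\phi,X)$ is faithful. Let $\tilde\phi:\tilde K\to G$ be the composition of $\phi$ with the inclusion $K\hookrightarrow G$, and let $Y$ be a transversal of $\tilde K$ in $G$. Then the action of $G$ on the tree $Y^*$ associated to $(G,\tilde K,\tilde\phi,Y)$ is a faithful self-similar action.
   Context: Construction of the action associated to a quadruple $(\Gamma,L,\psi,Z)$: $\Gamma$ is a group, $L\le\Gamma$ of finite index, $\psi:L\to\Gamma$ a homomorphism (a virtual endomorphism), and $Z$ a set of representatives of the left cosets $zL$ of $L$ in $\Gamma$. For $g\in\Gamma$ and $z\in Z$ let $z'\in Z$ be the representative with $gzL=z'L$, so $z'^{-1}gz\in L$. The associated action of $\Gamma$ on the rooted tree with vertex set $Z^*$ (finite words over $Z$) is defined recursively on word length by $g(\varnothing)=\varnothing$ and $g(zw)=z'\,\big(\psi(z'^{-1}gz)\big)(w)$. It is an action by tree automorphisms in which every state of (the image of) each element is again (the image of) an element of $\Gamma$, i.e. it is self-similar; its kernel is the $\psi$-core of $L$, i.e. the largest subgroup $M\le L$ with $\psi(M)\le M$ that is normal in $\Gamma$, which equals $\bigcap_{m\ge1}\bigcap_{g\in\Gamma}g^{-1}\mathrm{Dom}(\psi^m)g$. *)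

(* Defs.v *)
From Stdlib Require Import List ClassicalEpsilon.
Import ListNotations.
Set Implicit Arguments.

Section GroupDefs.
Variables (T : Type) (mul : T -> T -> T) (one : T) (inv : T -> T).

Definition is_group : Prop :=
  (forall x y z, mul x (mul y z) = mul (mul x y) z) /\
  (forall x, mul one x = x) /\ (forall x, mul x one = x) /\
  (forall x, mul (inv x) x = one) /\ (forall x, mul x (inv x) = one).

Definition is_subgroup (H : T -> Prop) : Prop :=
  H one /\ (forall x y, H x -> H y -> H (mul x y)) /\ (forall x, H x -> H (inv x)).

Definition finite_index (A H : T -> Prop) : Prop :=
  exists l : list T, (forall x, In x l -> A x) /\
    (forall g, A g -> exists x, In x l /\ H (mul (inv x) g)).

Definition transversal (A H Z : T -> Prop) : Prop :=
  (forall z, Z z -> A z) /\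
  (forall g, A g -> exists z, Z z /\ H (mul (inv z) g) /\
     forall z', Z z' -> H (mul (inv z') g) -> z' = z).

(* psi : H -> B is a homomorphism (values outside H are irrelevant) *)
Definition hom_on (H B : T -> Prop) (psi : T -> T) : Prop :=
  (forall x, H x -> B (psi x)) /\
  (forall x y, H x -> H y -> psi (mul x y) = mul (psi x) (psi y)).

(* Words over Z: vertices of the rooted tree Z^* *)
Definition word (Z : T -> Prop) (w : list T) : Prop := Forall Z w.

Definition rep (L Z : T -> Prop) (g z : T) : T :=
  epsilon (inhabits one) (fun z' => Z z' /\ L (mul (inv z') (mul g z))).

Fixpoint act (L : T -> Prop) (psi : T -> T) (Z : T -> Prop) (g : T) (w : list T)
  : list T :=
  match w with
  | [] => []
  | z :: w' =>
      let z' := rep L Z g z in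
      z' :: act L psi Z (psi (mul (inv z') (mul g z))) w'
  end.

Definition faithful_on (Gamma L : T -> Prop) (psi : T -> T) (Z : T -> Prop) : Prop :=
  forall g, Gamma g -> (forall w, word Z w -> act L psi Z g w = w) -> g = one.

Definition self_similar_action (Gamma L : T -> Prop) (psi : T -> T) (Z : T -> Prop)
  : Prop :=
  (forall g w, Gamma g -> word Z w -> word Z (act L psi Z g w)) /\
  (forall w, word Z w -> act L psi Z one w = w) /\
  (forall g h w, Gamma g -> Gamma h -> word Z w ->
     act L psi Z (mul g h) w = act L psi Z g (act L psi Z h w)) /\
  (forall g v, Gamma g -> word Z v ->
     exists h, Gamma h /\
       forall w, word Z w ->
         act L psi Z g (v ++ w) = act L psi Z g v ++ act L psi Z h w).

End GroupDefs.

(* Main.v *)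
Require Import Defs.
From Stdlib Require Import List ClassicalEpsilon.

Theorem mainTheorem5
  (T : Type) (mul : T -> T -> T) (one : T) (inv : T -> T)
  (HG : is_group mul one inv)
  (K Kt X Y : T -> Prop) (phi : T -> T)
  (HK : is_subgroup mul one inv K)
  (HKfin : finite_index mul inv (fun _ => True) K)
  (HKt : is_subgroup mul one inv Kt)
  (HKtK : forall x, Kt x -> K x)
  (HKtfin : finite_index mul inv K Kt)
  (Hphi : hom_on mul Kt K phi)
  (HX : transversal mul inv K Kt X)
  (Hfaith : faithful_on mul one inv K Kt phi X)
  (HY : transversal mul inv (fun _ => True) Kt Y) :
  faithful_on mul one inv (fun _ => True) Kt phi Y /\
  self_similar_action mul one inv (fun _ => True) Kt phi Y.
Proof.
  destruct HG as (assoc & idl & idr & invl & invr).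
  destruct HKt as (Kt1 & KtM & KtI).
  destruct HK as (K1 & KM & KI).
  destruct Hphi as (phiK & phiM).
  assert (c1 : forall x y, mul x (mul (inv x) y) = y).
  { intros; rewrite assoc, invr, idl; reflexivity. }
  assert (c2 : forall x y, mul (inv x) (mul x y) = y).
  { intros; rewrite assoc, invl, idl; reflexivity. }
  Ltac gs assoc idl idr invl invr c1 c2 :=
    repeat (rewrite <- assoc || rewrite c1 || rewrite c2 || rewrite idl
            || rewrite idr || rewrite invl || rewrite invr).
  set (rY := rep mul one inv Kt Y).
  set (aY := act mul one inv Kt phi Y).
  assert (rspec : forall g z, Y (rY g z) /\ Kt (mul (inv (rY g z)) (mul g z))).
  { intros g z. unfold rY, rep. apply epsilon_spec.
    destruct (proj2 HY (mul g z) I) as (z0 & Hz0 & Hk & _). eauto. }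
  assert (runiq : forall g z z', Y z' -> Kt (mul (inv z') (mul g z)) -> rY g z = z').
  { intros g z z' Yz' Kz'. destruct (proj2 HY (mul g z) I) as (z0 & Hz0 & Hk & Hu).
    destruct (rspec g z) as [A B].
    rewrite (Hu _ A B). symmetry. apply Hu; auto. }
  assert (phi1 : phi one = one).
  { assert (E := phiM one one Kt1 Kt1). rewrite idl in E.
    transitivity (mul (inv (phi one)) (mul (phi one) (phi one)));
      [rewrite c2; reflexivity | rewrite <- E, invl; reflexivity]. }
  assert (Hword : forall w g, word Y w -> word Y (aY g w)).
  { induction w as [|z w IH]; intros g Hw; simpl; [constructor|].
    inversion Hw; subst. constructor; [apply rspec | apply IH; auto]. }
  assert (Hone : forall w, word Y w -> aY one w = w).
  { induction w as [|z w IH]; intros Hw; [reflexivity|].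
    inversion Hw; subst. simpl. fold rY aY.
    assert (E : rY one z = z).
    { apply runiq; auto. rewrite idl, invl; auto. }
    unfold aY; simpl; fold rY aY.
    rewrite E, idl, invl, phi1. f_equal. apply IH; auto. }
  assert (Hcomp : forall w g h, word Y w -> aY (mul g h) w = aY g (aY h w)).
  { induction w as [|z w IH]; intros g h Hw; [reflexivity|].
    inversion Hw; subst. unfold aY; simpl; fold rY aY.
    destruct (rspec h z) as [Y1 K1'].
    destruct (rspec g (rY h z)) as [Y2 K2].
    set (z1 := rY h z) in *. set (z2 := rY g z1) in *.
    assert (Eq : mul (inv z2) (mul (mul g h) z) =
                 mul (mul (inv z2) (mul g z1)) (mul (inv z1) (mul h z))).
    { gs assoc idl idr invl invr c1 c2. reflexivity. }
    assert (E : rY (mul g h) z = z2).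
    { apply runiq; auto. rewrite Eq. apply KtM; auto. }
    rewrite E. f_equal. rewrite Eq, phiM by auto. apply IH; auto. }
  split.
  -
    intros g _ Hg.
    set (N := fun g => forall w, word Y w -> aY g w = w).
    assert (Nconj : forall g h, N g -> N (mul h (mul g (inv h)))).
    { intros g0 h Hg0 w Hw. rewrite Hcomp, Hcomp by (auto; apply Hword; auto).
      rewrite Hg0 by (apply Hword; auto). rewrite <- Hcomp by auto.
      rewrite invr. apply Hone; auto. }
    assert (Nsec : forall g, N g -> forall y, Y y ->
               Kt (mul (inv y) (mul g y)) /\ N (phi (mul (inv y) (mul g y)))).
    { intros g0 Hg0 y Yy.
      assert (E : rY g0 y = y).
      { assert (H := Hg0 (y :: nil) (Forall_cons _ Yy (Forall_nil _))).
        simpl in H. injection H; auto. }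
      split.
      - rewrite <- E at 1. apply rspec.
      - intros w Hw. assert (H := Hg0 (y :: w) (Forall_cons _ Yy Hw)).
        unfold aY in H; simpl in H; fold rY aY in H. rewrite E in H. injection H; auto. }
    destruct (proj2 HY one I) as (y0 & Yy0 & _).
    assert (NKt : forall g, N g -> Kt g /\ N (phi g)).
    { intros g0 Hg0.
      destruct (Nsec _ (Nconj g0 y0 Hg0) y0 Yy0) as [A B].
      assert (Eq : mul (inv y0) (mul (mul y0 (mul g0 (inv y0))) y0) = g0).
      { gs assoc idl idr invl invr c1 c2. reflexivity. }
      rewrite Eq in A, B. auto. }
    assert (Ng : N g) by exact Hg.
    destruct (NKt g Ng) as [Ktg _].
    apply Hfaith; [auto|].
    clear Hg.
    revert g Ng Ktg.
    intros g Ng _ w Hw. revert g Ng.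
    induction w as [|x w IH]; intros g0 Hg0; [reflexivity|].
    inversion Hw; subst. simpl.
    assert (Xx := H1).
    assert (Kx : K x) by (apply (proj1 HX); auto).
    assert (Nc : N (mul (inv x) (mul g0 x))).
    { assert (H := Nconj g0 (inv x) Hg0).
      assert (Eq : mul (inv x) (mul g0 (inv (inv x))) = mul (inv x) (mul g0 x)).
      { f_equal. f_equal. rewrite <- (idr (inv (inv x))), <- (invl x), assoc, invl, idl.
        reflexivity. }
      rewrite Eq in H. exact H. }
    destruct (NKt _ Nc) as [Kc Nc'].
    assert (E : rep mul one inv Kt X g0 x = x).
    { assert (Kg0 : K (mul g0 x)).
      { apply KM; auto. apply HKtK, (proj1 (NKt g0 Hg0)). }
      destruct (proj2 HX (mul g0 x) Kg0) as (z0 & Xz0 & Kz0 & Hu).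
      assert (S : X (rep mul one inv Kt X g0 x) /\
                  Kt (mul (inv (rep mul one inv Kt X g0 x)) (mul g0 x))).
      { unfold rep. apply epsilon_spec. exists x; auto. }
      destruct S as [S1 S2]. rewrite (Hu _ S1 S2). symmetry. apply Hu; auto. }
    rewrite E. f_equal. apply IH; auto.
  - split; [intros; apply Hword; auto|].
    split; [exact Hone|].
    split; [intros; apply Hcomp; auto|].
    intros g v _ Hv. revert g.
    induction v as [|z v IH]; intros g.
    + exists g. split; auto.
    + inversion Hv; subst. destruct (IH H2 (phi (mul (inv (rY g z)) (mul g z))))
        as (h & _ & Hh).
      exists h. split; auto. intros w Hw. unfold aY; simpl; fold rY aY. rewrite Hh; auto.
Qed.
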